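(* Let $k\ge2$, $r\ge0$ and $n=2\cdot 3^k-2+4r$. Let $M$ be the closed surface carrying the polyhedral map $D_{\{2k+1,2k+1\}}(n)$. Then $M$ is orientable if $r$ is even and non-orientable if $r$ is odd.
   Context: Vertex set $\mathbb{Z}_n$; integers are read modulo $n$. Define $w_0=0$, $w_1=3^k-1+2r$. Then successively subtract $3^{k-1}+r$ twice, then $3^{k-2}$ twice, $3^{k-3}$ twice, ..., and finally $3$ twice. This gives vertices $w_2,\dots,w_{2k-1}$, and one checks $w_{2k-1}=2$. Let $P$ be the $(2k+1)$-gon with cyclically ordered boundary vertices $(0,w_1,w_2,\dots,w_{2k-2},2,1)$. The map $D_{\{2k+1,2k+1\}}(n)$ is the 2-dimensional cell complex whose 2-cells are the $n$ translates $P+i$, $i\in\mathbb{Z}_n$. It is a known standing fact (Datta) that this is a $\{2k+1,2k+1\}$-equivelar polyhedral map on a closed surface $M$: every 2-cell is a $(2k+1)$-gon, every vertex has degree $2k+1$, and any two 2-cells meet in the empty set, a common vertex, or a common edge. *)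

(* Defs.v *)
From mathcomp Require Import all_boot.
Set Implicit Arguments. Unset Strict Implicit. Unset Printing Implicit Defensive.

Definition Dn (k r : nat) : nat := 2 * 3 ^ k - 2 + 4 * r.

(* Amount subtracted to go from w_j to w_{j+1}, for j >= 1:
   steps j = 1,2 subtract 3^(k-1)+r ; steps j = 3,4 subtract 3^(k-2); ...;
   steps j = 2k-3, 2k-2 subtract 3. *)
Definition wstep (k r j : nat) : nat :=
  let s := (j - 1) %/ 2 in 3 ^ (k - 1 - s) + (if s == 0 then r else 0).

(* w_j as integers (all values are nonnegative, so nat subtraction is exact). *)
Fixpoint w (k r j : nat) : nat :=
  match j with
  | 0 => 0
  | 1 => 3 ^ k - 1 + 2 * r
  | j'.+1 => w k r j' - wstep k r j'
  end.

(* boundary cycle of P: (0, w_1, ..., w_{2k-2}, 2, 1) *)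
Definition polyP (k r : nat) : seq nat :=
  [seq w k r j | j <- iota 0 (2 * k - 1)] ++ [:: 2; 1].

(* the translate P + i, with vertices read in Z_n (represented by 0..n-1) *)
Definition faceD (k r i : nat) : seq nat :=
  [seq (x + i) %% Dn k r | x <- polyP k r].

Definition facesD (k r : nat) : seq (seq nat) :=
  [seq faceD k r i | i <- iota 0 (Dn k r)].

Definition dedges (s : seq nat) : seq (nat * nat) :=
  [seq (nth 0 s p, nth 0 s ((p + 1) %% size s)) | p <- iota 0 (size s)].

Definition orient (b : bool) (s : seq nat) : seq nat := if b then s else rev s.

(* A polygonal cell complex (list of faces, each a cyclic vertex list) is
   orientable iff the faces can be coherently oriented: no directed edge
   occurs in two distinct oriented faces (equivalently, every shared edge is
   traversed in opposite directions by the two faces containing it). *)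
Definition orientable_complex (F : seq (seq nat)) : Prop :=
  exists eps : nat -> bool,
    forall i j, i < size F -> j < size F ->
    forall e, e \in dedges (orient (eps i) (nth [::] F i)) ->
              e \in dedges (orient (eps j) (nth [::] F j)) -> i = j.

(* Main.v *)
Require Import Defs.
From mathcomp Require Import all_boot.
From Stdlib Require Import Lia.

Ltac tolia0 := repeat match goal with
 | H : is_true (_ <= _) |- _ => move/leP: H => H
 | H : is_true (_ == _) |- _ => move/eqP: H => H
 | H : is_true (~~ (_ == _)) |- _ => move/eqP: H => H
 | |- is_true (_ <= _) => apply/leP
 | |- is_true (_ == _) => apply/eqP
 end; unfold addn, subn, muln in *; lia.
Ltac tolia := intros; repeat (match goal with |- _ /\ _ => split end); tolia0.

Section S.
Variables k r : nat.

Lemma pow3S m : 3 ^ m.+1 = 3 * 3 ^ m.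
Proof. by rewrite expnS. Qed.

Lemma wstep_odd_idx t : wstep k r (t.*2.+1) = 3 ^ (k - 1 - t) + (if t == 0 then r else 0).
Proof.
have E : (t.*2.+1 - 1) %/ 2 = t by rewrite subSS subn0 -muln2 mulnK.
by rewrite /wstep E.
Qed.
Lemma wstep_even_idx t : wstep k r (t.*2.+2) = 3 ^ (k - 1 - t) + (if t == 0 then r else 0).
Proof.
have E : (t.*2.+2 - 1) %/ 2 = t.
  by rewrite subSS subn0 -muln2 -addn1 divnMDl // divn_small // addn0.
by rewrite /wstep E.
Qed.

Lemma wS j : 0 < j -> w k r j.+1 = w k r j - wstep k r j.
Proof. by case: j. Qed.

Lemma wclosed (hk : 2 <= k) t : t <= k - 1 ->
  w k r (t.*2.+1) = 3 * 3 ^ (k - 1 - t) - 1 + (if t == 0 then 2 * r else 0) /\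
  w k r (t.*2.+2) = 2 * 3 ^ (k - 1 - t) - 1 + (if t == 0 then r else 0) /\
  w k r (t.*2.+3) = 3 ^ (k - 1 - t) - 1.
Proof.
elim: t => [|t IH] Ht.
  have Ek : k = (k - 1).+1 by tolia.
  have Hw1 : w k r 1 = 3 * 3 ^ (k - 1 - 0) - 1 + 2 * r.
    by rewrite /= subn0 -pow3S -Ek.
  have Hw2 : w k r 2 = 2 * 3 ^ (k - 1 - 0) - 1 + r.
    rewrite (wS 1) // Hw1 (wstep_odd_idx 0) /=.
    have : 0 < 3 ^ (k - 1 - 0) by rewrite expn_gt0. tolia.
  split; first by rewrite Hw1.
  split; first by rewrite Hw2.
  rewrite (wS 2) // Hw2 (wstep_even_idx 0) /=.
  have : 0 < 3 ^ (k - 1 - 0) by rewrite expn_gt0. tolia.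
have Ht' : t <= k - 1 by tolia.
have [_ [_ H3]] := IH Ht'.
have E : k - 1 - t = (k - 1 - t.+1).+1 by tolia.
have Hpos : 0 < 3 ^ (k - 1 - t.+1) by rewrite expn_gt0.
have Ha : w k r (t.+1).*2.+1 = 3 * 3 ^ (k - 1 - t.+1) - 1.
  by rewrite doubleS H3 E pow3S.
have Hb : w k r (t.+1).*2.+2 = 2 * 3 ^ (k - 1 - t.+1) - 1.
  rewrite wS // Ha wstep_odd_idx /=.
  tolia.
split; first by rewrite Ha /= addn0.
split; first by rewrite Hb /= addn0.
rewrite wS // Hb wstep_even_idx /=.
tolia.
Qed.
End S.

Lemma decomp p : 0 < p -> exists t b, b < 2 /\ p = 2 * t + b + 1.
Proof.
case: p => [|q] // _.
exists q./2, (odd q).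
have := odd_double_half q. rewrite -muln2.
case: (odd q) => /= E; split => //; tolia.
Qed.

Section T.
Variables k r : nat.

Lemma step_facts (hk : 2 <= k) p : 0 < p -> p <= 2 * k ->
  w k r p.+1 + wstep k r p = w k r p /\ 0 < wstep k r p /\
  wstep k r p < 3 ^ k - 1 + 2 * r /\ w k r p <= 3 ^ k - 1 + 2 * r.
Proof.
move=> Hp Hpk.
have [t [b [Hb Ep]]] := @decomp p Hp.
have Ht : t <= k - 1 by tolia.
have [H1 [H2 H3]] := @wclosed k r hk t Ht.
have EY : 3 ^ k = 3 * 3 ^ (k - 1).
  by rewrite -pow3S; congr (3 ^ _); tolia.
have HX : 0 < 3 ^ (k - 1 - t) by rewrite expn_gt0.
have HXY : 3 ^ (k - 1 - t) <= 3 ^ (k - 1) by rewrite leq_pexp2l //; tolia.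
have [Ht0|Ht0] : t = 0 \/ t != 0 by case: (t == 0) / eqP; auto.
  subst t. rewrite subn0 in H1 H2 H3 HX HXY.
  case: b Hb Ep => [|[|//]] _ Ep; subst p.
  - rewrite (_ : 2 * 0 + 0 + 1 = 0.*2.+1) // H1 H2 (wstep_odd_idx k r 0) /= subn0. tolia.
  - rewrite (_ : 2 * 0 + 1 + 1 = 0.*2.+2) // H2 H3 (wstep_even_idx k r 0) /= subn0. tolia.
rewrite (negbTE Ht0) in H1 H2.
case: b Hb Ep => [|[|//]] _ Ep; subst p.
- have -> : 2 * t + 0 + 1 = t.*2.+1 by rewrite -muln2; tolia.
  rewrite H1 H2 wstep_odd_idx (negbTE Ht0). tolia.
- have -> : 2 * t + 1 + 1 = t.*2.+2 by rewrite -muln2; tolia.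
  rewrite H2 H3 wstep_even_idx (negbTE Ht0). tolia.
Qed.
End T.

Section U.
Variables k r : nat.

Lemma wstep_tb t b : b < 2 ->
  wstep k r (2 * t + b + 1) = 3 ^ (k - 1 - t) + (if t == 0 then r else 0).
Proof.
case: b => [|[|//]] _.
  by rewrite (_ : 2 * t + 0 + 1 = t.*2.+1) ?wstep_odd_idx // -muln2; tolia.
by rewrite (_ : 2 * t + 1 + 1 = t.*2.+2) ?wstep_even_idx // -muln2; tolia.
Qed.

Lemma sv_inj t t' : t <= k - 1 -> t' <= k - 1 ->
  3 ^ (k - 1 - t) + (if t == 0 then r else 0) =
  3 ^ (k - 1 - t') + (if t' == 0 then r else 0) -> t = t'.
Proof.
have key : forall u u', u = 0 -> u' != 0 -> u' <= k - 1 ->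
   3 ^ (k - 1 - u) + r <> 3 ^ (k - 1 - u').
  move=> u u' -> Hu' Hu'k E.
  have : 3 ^ (k - 1 - u') < 3 ^ (k - 1 - 0) by rewrite ltn_exp2l //; tolia.
  rewrite -E => ?. tolia.
move=> Ht Ht'.
case: (t =P 0) => [Et|/eqP Nt]; case: (t' =P 0) => [Et'|/eqP Nt'].
- by rewrite Et Et'.
- rewrite Et /= addn0 => E. by case: (key 0 t' erefl Nt' Ht').
- rewrite Et' /= addn0 => E. by case: (key 0 t erefl Nt Ht).
rewrite !addn0 => /expnI E.
have := E isT. tolia.
Qed.

Lemma s_inj (hk : 2 <= k) p q : 0 < p -> p <= 2 * k -> 0 < q -> q <= 2 * k ->
  wstep k r p = wstep k r q -> p = q \/ p = q.+1 \/ q = p.+1.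
Proof.
move=> Hp Hpk Hq Hqk.
have [t [b [Hb Ep]]] := @decomp p Hp.
have [t' [b' [Hb' Eq]]] := @decomp q Hq.
rewrite Ep Eq !wstep_tb // => /sv_inj E.
have Et : t = t' by apply: E; tolia.
subst. tolia.
Qed.

Lemma s_odd p : ~~ odd r -> 0 < p -> odd (wstep k r p).
Proof.
move=> Hr Hp.
have [t [b [Hb Ep]]] := @decomp p Hp.
rewrite Ep wstep_tb // oddD oddX orbT.
by case: (t == 0) => //=; rewrite (negbTE Hr).
Qed.
End U.

Lemma dedgesP s e : e \in dedges s ->
  exists2 p, p < size s & e = (nth 0 s p, nth 0 s ((p + 1) %% size s)).
Proof. by case/mapP => p; rewrite mem_iota add0n => Hp ->; exists p. Qed.

Lemma dedges_in s p : p < size s ->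
  (nth 0 s p, nth 0 s ((p + 1) %% size s)) \in dedges s.
Proof.
move=> Hp; apply/mapP; exists p => //; by rewrite mem_iota add0n.
Qed.

Lemma dedges_rev s x y : (x, y) \in dedges (rev s) -> (y, x) \in dedges s.
Proof.
case/dedgesP => q; rewrite size_rev => Hq [-> ->].
set N := size s.
have HN : 0 < N by tolia.
case: (ltnP q.+1 N) => Hq1.
  rewrite addn1 (modn_small Hq1) !nth_rev ?size_rev //.
  have E : N - q.+1 = (N - q.+2) + 1 by tolia.
  rewrite E.
  have H1 : N - q.+2 + 1 < N by tolia.
  rewrite -(modn_small H1).
  apply: dedges_in. tolia.
have Eq : q = N.-1 by tolia.
rewrite addn1 Eq prednK // modnn !nth_rev ?size_rev -/N ?prednK ?subnn //; try tolia.
have H : N - 1 < size s by rewrite -/N; tolia.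
have := @dedges_in s _ H. by rewrite subnK // modnn.
Qed.

Lemma dedges_rev' s x y : (x, y) \in dedges s -> (y, x) \in dedges (rev s).
Proof. by move=> H; apply: dedges_rev; rewrite revK. Qed.

Section V.
Variables k r : nat.

Lemma wend (hk : 2 <= k) : w k r (2 * k - 1) = 2 /\ w k r (2 * k) = 1 /\ w k r (2 * k + 1) = 0.
Proof.
have Ht : k - 1 <= k - 1 by [].
have [H1 [H2 H3]] := @wclosed k r hk (k - 1) Ht.
have Hk0 : (k - 1 == 0) = false by apply/eqP; tolia.
rewrite Hk0 subnn expn0 in H1 H2 H3.
rewrite (_ : 2 * k - 1 = (k - 1).*2.+1); last by rewrite -muln2; tolia.
rewrite (_ : 2 * k = (k - 1).*2.+2); last by rewrite -muln2; tolia.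
rewrite (_ : (k - 1).*2.+2 + 1 = (k - 1).*2.+3); last by rewrite addn1.
by rewrite H1 H2 H3.
Qed.

Lemma w123 (hk : 2 <= k) :
  w k r 1 = 3 ^ k - 1 + 2 * r /\
  w k r 2 + (3 ^ (k - 1) + r) = 3 ^ k - 1 + 2 * r /\
  w k r 3 + 2 * (3 ^ (k - 1) + r) = 3 ^ k - 1 + 2 * r /\
  3 ^ k = 3 * 3 ^ (k - 1).
Proof.
have Ht : 0 <= k - 1 by [].
have [H1 [H2 H3]] := @wclosed k r hk 0 Ht.
rewrite subn0 in H1 H2 H3.
have EY : 3 ^ k = 3 * 3 ^ (k - 1).
  by rewrite -pow3S; congr (3 ^ _); tolia.
have HX : 0 < 3 ^ (k - 1) by rewrite expn_gt0.
rewrite H2 H3 /=. tolia.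
Qed.

Lemma polyP_eq (hk : 2 <= k) : polyP k r = [seq w k r p | p <- iota 0 (2 * k + 1)].
Proof.
have [E1 [E2 _]] := wend hk.
rewrite /polyP (_ : 2 * k + 1 = (2 * k - 1) + 2); last by tolia.
rewrite iotaD map_cat add0n (_ : iota (2 * k - 1) 2 = [:: 2 * k - 1; 2 * k]).
  by rewrite map_cons E1 map_cons E2.
rewrite /= (_ : (2 * k - 1).+1 = 2 * k) //; tolia.
Qed.

Lemma faceD_eq (hk : 2 <= k) i :
  faceD k r i = [seq (w k r p + i) %% Dn k r | p <- iota 0 (2 * k + 1)].
Proof. by rewrite /faceD polyP_eq // -map_comp. Qed.

Lemma nth_face (hk : 2 <= k) i p : p <= 2 * k ->
  nth 0 (faceD k r i) p = (w k r p + i) %% Dn k r.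
Proof.
move=> Hp. rewrite faceD_eq // (nth_map 0) ?size_iota ?nth_iota //; tolia.
Qed.

Lemma size_face (hk : 2 <= k) i : size (faceD k r i) = 2 * k + 1.
Proof. by rewrite faceD_eq // size_map size_iota. Qed.

Lemma nth_face_next (hk : 2 <= k) i p : p <= 2 * k ->
  nth 0 (faceD k r i) ((p + 1) %% size (faceD k r i)) = (w k r p.+1 + i) %% Dn k r.
Proof.
move=> Hp. rewrite size_face //.
case: (ltnP p (2 * k)) => Hp2.
  rewrite modn_small ?nth_face ?addn1 //; tolia.
have Ep : p = 2 * k by tolia.
have [_ [_ E3]] := wend hk.
rewrite Ep modnn nth_face // -addn1 E3. by [].
Qed.

Lemma face_edge_of (hk : 2 <= k) i e : e \in dedges (faceD k r i) ->
  exists2 p, p <= 2 * k & e = ((w k r p + i) %% Dn k r, (w k r p.+1 + i) %% Dn k r).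
Proof.
case/dedgesP => p Hp ->.
have Hp' : p <= 2 * k by move: Hp; rewrite size_face //; tolia.
exists p => //. by rewrite nth_face_next // nth_face.
Qed.

Lemma face_edge_in (hk : 2 <= k) i p : p <= 2 * k ->
  ((w k r p + i) %% Dn k r, (w k r p.+1 + i) %% Dn k r) \in dedges (faceD k r i).
Proof.
move=> Hp. rewrite -(@nth_face_next hk i p Hp) -(@nth_face hk i p Hp).
apply: dedges_in. rewrite size_face //. tolia.
Qed.
End V.

Lemma mod2 x n : x < 2 * n -> (x < n /\ x %% n = x) \/ (n <= x /\ x %% n + n = x).
Proof.
move=> Hx. case: (ltnP x n) => H.
  by left; rewrite modn_small.
right; split => //.
have E : x = (x - n) + n by rewrite subnK.
rewrite {1}E modnDr modn_small -?E //. tolia.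
Qed.

Lemma modcases a b n : a < 2 * n -> b < 2 * n -> a %% n = b %% n ->
  a = b \/ a = b + n \/ a + n = b.
Proof.
move=> /mod2 Ha /mod2 Hb E. move: Ha Hb. rewrite E. tolia.
Qed.

Lemma double_half_nat x : x = 2 * x./2 + odd x.
Proof. have := odd_double_half x. rewrite -muln2. tolia. Qed.

Section W.
Variables k r : nat.
Notation h := (3 ^ k - 1 + 2 * r).
Notation n := (Dn k r).

Lemma Dn_h : n = 2 * h.
Proof. rewrite /Dn. have : 0 < 3 ^ k by rewrite expn_gt0. tolia. Qed.

Lemma h_even : exists g, h = 2 * g.
Proof.
have O : odd (3 ^ k) by rewrite oddX orbT.
have := double_half_nat (3 ^ k). rewrite O /=. move=> E.
exists ((3 ^ k)./2 + r). tolia.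
Qed.

Lemma wle (hk : 2 <= k) p : p <= 2 * k + 1 -> w k r p <= h.
Proof.
move=> Hp. case: (posnP p) => [->|Hp0] //.
case: (ltnP p (2 * k + 1)) => Hp1.
  have Hp2 : p <= 2 * k by tolia.
  by have [_ [_ [_ ->]]] := @step_facts k r hk p Hp0 Hp2.
have -> : p = 2 * k + 1 by tolia.
by have [_ [_ ->]] := @wend k r hk.
Qed.

Lemma pfacts (hk : 2 <= k) p : p <= 2 * k ->
  (p = 0 /\ w k r p = 0 /\ w k r p.+1 = h) \/
  (0 < p /\ w k r p.+1 + wstep k r p = w k r p /\ 0 < wstep k r p /\ wstep k r p < h).
Proof.
move=> Hp. case: (posnP p) => [->|Hp0]; first by left.
right. have [A [B [C _]]] := @step_facts k r hk p Hp0 Hp. by [].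
Qed.

Lemma core_same (hk : 2 <= k) (Hr : ~~ odd r) p q i j a b oi oj :
  p <= 2 * k -> q <= 2 * k -> i < n -> j < n ->
  (w k r p + i) %% n = (w k r q + j) %% n ->
  (w k r p.+1 + i) %% n = (w k r q.+1 + j) %% n ->
  i = 2 * a + oi -> j = 2 * b + oj -> oi = oj -> i = j.
Proof.
move=> Hp Hq Hi Hj A1 A2 Ei Ej Eo.
have Hn := Dn_h.
have W1 : w k r p <= h by apply: wle; tolia.
have W2 : w k r q <= h by apply: wle; tolia.
have W3 : w k r p.+1 <= h by apply: wle; tolia.
have W4 : w k r q.+1 <= h by apply: wle; tolia.
have C1 : w k r p + i < 2 * n by tolia.
have C2 : w k r q + j < 2 * n by tolia.
have C3 : w k r p.+1 + i < 2 * n by tolia.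
have C4 : w k r q.+1 + j < 2 * n by tolia.
have B1 := @modcases _ _ _ C1 C2 A1.
have B2 := @modcases _ _ _ C3 C4 A2.
clear A1 A2 C1 C2 C3 C4.
have [[Ep [P1 P2]]|[Ep [P1 [P2 P3]]]] := @pfacts hk p Hp;
have [[Eq [Q1 Q2]]|[Eq [Q1 [Q2 Q3]]]] := @pfacts hk q Hq; try tolia.
have Es : wstep k r p = wstep k r q by tolia.
have Hp' : p <= 2 * k by []. have Hq' : q <= 2 * k by [].
have [E|[E|E]] := @s_inj k r hk p q Ep Hp Eq Hq Es; first by subst; tolia.
- have O := @s_odd k r p Hr Ep. have D := double_half_nat (wstep k r p). rewrite O addn1 in D. subst p. tolia.
- have O := @s_odd k r q Hr Eq. have D := double_half_nat (wstep k r q). rewrite O addn1 in D. subst q. tolia.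
Qed.

Lemma core_mixed (hk : 2 <= k) p q i j a b oi oj :
  p <= 2 * k -> q <= 2 * k -> i < n -> j < n ->
  (w k r p + i) %% n = (w k r q.+1 + j) %% n ->
  (w k r p.+1 + i) %% n = (w k r q + j) %% n ->
  i = 2 * a + oi -> j = 2 * b + oj -> oi < 2 -> oj < 2 -> oi <> oj -> False.
Proof.
move=> Hp Hq Hi Hj A1 A2 Ei Ej Hoi Hoj Eo.
have Hn := Dn_h.
have [g Hg] := h_even.
have W1 : w k r p <= h by apply: wle; tolia.
have W2 : w k r q <= h by apply: wle; tolia.
have W3 : w k r p.+1 <= h by apply: wle; tolia.
have W4 : w k r q.+1 <= h by apply: wle; tolia.
have C1 : w k r p + i < 2 * n by tolia.
have C2 : w k r q.+1 + j < 2 * n by tolia.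
have C3 : w k r p.+1 + i < 2 * n by tolia.
have C4 : w k r q + j < 2 * n by tolia.
have B1 := @modcases _ _ _ C1 C2 A1.
have B2 := @modcases _ _ _ C3 C4 A2.
clear A1 A2 C1 C2 C3 C4.
have [[Ep [P1 P2]]|[Ep [P1 [P2 P3]]]] := @pfacts hk p Hp;
have [[Eq [Q1 Q2]]|[Eq [Q1 [Q2 Q3]]]] := @pfacts hk q Hq; try subst p; try subst q; tolia.
Qed.
End W.

Lemma common b F G e : e \in dedges F -> e \in dedges G ->
  exists e', e' \in dedges (orient b F) /\ e' \in dedges (orient b G).
Proof.
case: e => x y H1 H2. case: b.
  by exists (x, y).
by exists (y, x); split; apply: dedges_rev'.
Qed.

Section X.
Variables k r : nat.
Notation h := (3 ^ k - 1 + 2 * r).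
Notation n := (Dn k r).

Lemma size_faces : size (facesD k r) = n.
Proof. by rewrite /facesD size_map size_iota. Qed.

Lemma nth_faces i : i < n -> nth [::] (facesD k r) i = faceD k r i.
Proof. move=> Hi. by rewrite /facesD (nth_map 0) ?size_iota // nth_iota. Qed.

Lemma get_edge (hk : 2 <= k) bb i e : e \in dedges (orient bb (faceD k r i)) ->
  exists2 p, p <= 2 * k &
    (if bb then e = ((w k r p + i) %% n, (w k r p.+1 + i) %% n)
     else e = ((w k r p.+1 + i) %% n, (w k r p + i) %% n)).
Proof.
case: bb => /= H.
  exact: face_edge_of.
case: e H => x y /dedges_rev /(@face_edge_of k r hk i) [p Hp [-> ->]].
by exists p.
Qed.

Lemma orientable_part (hk : 2 <= k) : ~~ odd r -> orientable_complex (facesD k r).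
Proof.
move=> Hr. exists odd => i j.
rewrite size_faces => Hi Hj e.
rewrite nth_faces // nth_faces // => E1 E2.
have [p Hp Ep] := @get_edge hk _ _ _ E1.
have [q Hq Eq] := @get_edge hk _ _ _ E2.
have Di := double_half_nat i. have Dj := double_half_nat j.
move: Ep Eq Di Dj.
case: (odd i); case: (odd j) => Ep Eq Di Dj; rewrite Ep in Eq; case: Eq => A1 A2.
- exact: (@core_same k r hk Hr _ _ _ _ _ _ _ _ Hp Hq Hi Hj A1 A2 Di Dj).
- by case: (@core_mixed k r hk _ _ _ _ _ _ _ _ Hp Hq Hi Hj A1 A2 Di Dj).
- by case: (@core_mixed k r hk _ _ _ _ _ _ _ _ Hq Hp Hj Hi (esym A1) (esym A2) Dj Di).
- exact: (@core_same k r hk Hr _ _ _ _ _ _ _ _ Hp Hq Hi Hj A2 A1 Di Dj).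
Qed.
End X.

Section Y.
Variables k r : nat.
Notation h := (3 ^ k - 1 + 2 * r).
Notation n := (Dn k r).

Lemma nonorientable_part (hk : 2 <= k) : odd r -> ~ orientable_complex (facesD k r).
Proof.
move=> Hr [eps H].
have Hn := Dn_h k r.
have HY : 0 < 3 ^ (k - 1) by rewrite expn_gt0.
have [W1 [W2 [W3 EY]]] := @w123 k r hk.
have [V1 [V2 V3]] := @wend k r hk.
have H' : forall i j e, i < n -> j < n -> e \in dedges (faceD k r i) ->
    e \in dedges (faceD k r j) -> eps i = eps j -> i = j.
  move=> i j e Hi Hj Ei Ej Eij.
  have [e' [A B]] := @common (eps i) _ _ _ Ei Ej.
  apply: (H i j _ _ e'); rewrite ?size_faces ?nth_faces // -Eij //.
have Alt : forall i, i.+1 < n -> eps i != eps i.+1.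
  move=> i Hi. apply/negP => /eqP Eq.
  have B1 : 2 * k - 1 <= 2 * k by tolia.
  have B2 : 2 * k <= 2 * k by [].
  have Ea := @face_edge_in k r hk i (2 * k - 1) B1.
  have Eb := @face_edge_in k r hk i.+1 (2 * k) B2.
  rewrite (_ : (2 * k - 1).+1 = 2 * k) in Ea; last by tolia.
  rewrite V1 V2 in Ea. rewrite V2 -[(2 * k).+1]addn1 V3 in Eb.
  rewrite (_ : 1 + i.+1 = 2 + i) in Eb; last by tolia.
  rewrite (_ : 0 + i.+1 = 1 + i) in Eb; last by tolia.
  have Hi' : i < n by tolia.
  have := H' i i.+1 _ Hi' Hi Ea Eb Eq. tolia.
have Par : forall i, i < n -> eps i = eps 0 (+) odd i.
  elim => [|i IH] Hi; first by rewrite addbF.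
  have := Alt i Hi. rewrite IH; last by tolia.
  rewrite oddS.
  by case: (eps i.+1); case: (eps 0); case: (odd i).
pose m := 3 ^ (k - 1) + r.
have Hme : ~~ odd m by rewrite /m oddD oddX orbT Hr.
have Hm0 : 0 < m by rewrite /m; tolia.
have Hmn : m < n by rewrite /m; tolia.
have Em := Par m Hmn. rewrite (negbTE Hme) addbF in Em.
have B1 : 1 <= 2 * k by tolia.
have B2 : 2 <= 2 * k by tolia.
have Ea := @face_edge_in k r hk 0 1 B1.
have Eb := @face_edge_in k r hk m 2 B2.
have E2 : w k r 2 + m = w k r 1 + 0 by rewrite /m; tolia.
have E3 : w k r 3 + m = w k r 2 + 0 by rewrite /m; tolia.
rewrite E2 E3 in Eb.
have Hn0 : 0 < n by tolia.
have := H' 0 m _ Hn0 Hmn Ea Eb (esym Em). tolia.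
Qed.
End Y.

Theorem mainTheorem16 (k r : nat) (hk : 2 <= k) :
  (~~ odd r -> orientable_complex (facesD k r)) /\
  (odd r -> ~ orientable_complex (facesD k r)).
Proof.
split.
- exact: orientable_part.
- exact: nonorientable_part.
Qed.
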